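(* Let $(!, \delta, \varepsilon, \Delta, \mathsf{e}, \mathsf{m},\mathsf{m}_K)$ be a monoidal coalgebra modality on an additive symmetric monoidal category $(\mathbb{X}, \otimes, K)$. Then for every object $A$, the symmetric comonoidal monad $(!(A) \otimes -, \mu^{\nabla_A}, \eta^{\mathsf{u}_A}, \mathsf{n}^{\Delta_A}, \mathsf{n}^{\mathsf{e}_A}_K)$ together with the natural transformation $\lambda_X := (\delta_A\otimes 1_{!(X)});\mathsf{m}_{!(A),X} : !(A)\otimes !(X)\to !(!(A)\otimes X)$ is an exponential lifting monad of $(!, \delta, \varepsilon, \Delta, \mathsf{e}, \mathsf{m},\mathsf{m}_K)$.
   Context: Composition is in diagrammatic order; $\alpha,\ell,\rho$ are associator and unitors and $\tau$ the interchange $(A\otimes B)\otimes(C\otimes D)\to(A\otimes C)\otimes(B\otimes D)$. An additive symmetric monoidal category is a symmetric monoidal category whose hom-sets are commutative monoids ($+$, $0$), with composition and $\otimes$ preserving sums and zeros in each argument (no negatives assumed). A monoidal coalgebra modality is a symmetric monoidal comonad $(!,\delta,\varepsilon,\mathsf{m},\mathsf{m}_K)$ ($\mathsf{m}_{A,B}:!(A)\otimes!(B)\to!(A\otimes B)$, $\mathsf{m}_K:K\to!(K)$) with natural cocommutative comonoids $(!(A),\Delta_A,\mathsf{e}_A)$ such that $\delta_A$ is a comonoid morphism and $\Delta,\mathsf{e}$ are monoidal transformations and $!$-coalgebra morphisms. Define $\nabla_A := (\delta_A\otimes\delta_A);\mathsf{m}_{!(A),!(A)};!\big(((\varepsilon_A\otimes\mathsf{e}_A);\rho_A)+((\mathsf{e}_A\otimes\varepsilon_A);\ell_A)\big):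 !(A)\otimes!(A)\to!(A)$ and $\mathsf{u}_A:=\mathsf{m}_K;!(0_{K,A}):K\to!(A)$; then $(!(A),\nabla_A,\mathsf{u}_A,\Delta_A,\mathsf{e}_A)$ is a commutative and cocommutative bimonoid and $((!(A),\delta_A),\nabla_A,\mathsf{u}_A)$ is a monoid in the category of $!$-coalgebras. The monad is $\mu_X=\alpha_{!(A),!(A),X};(\nabla_A\otimes1_X)$, $\eta_X=\ell^{-1}_X;(\mathsf{u}_A\otimes1_X)$, $\mathsf{n}_{X,Y}=(\Delta_A\otimes1_{X\otimes Y});\tau_{!(A),!(A),X,Y}$, $\mathsf{n}_K=\rho_{!(A)};\mathsf{e}_A$. An exponential lifting monad is a symmetric comonoidal monad $(\mathsf{T},\mu,\eta,\mathsf{n},\mathsf{n}_K)$ with a natural $\lambda_X:\mathsf{T}!(X)\to!\mathsf{T}(X)$ satisfying $\mu_{!(X)};\lambda_X=\mathsf{T}(\lambda_X);\lambda_{\mathsf{T}(X)};!(\mu_X)$, $\eta_{!(X)};\lambda_X=!(\eta_X)$, $\mathsf{T}(\delta_X);\lambda_{!(X)};!(\lambda_X)=\lambda_X;\delta_{\mathsf{T}(X)}$, $\lambda_X;\varepsilon_{\mathsf{T}(X)}=\mathsf{T}(\varepsilon_X)$, $\mathsf{n}_{!(X),!(Y)};(\lambda_X\otimes\lambda_Y);\mathsf{m}_{\mathsf{T}(X),\mathsf{T}(Y)}=\mathsf{T}(\mathsf{m}_{X,Y});\lambda_{X\otimes Y};!(\mathsf{n}_{X,Y})$ and $\mathsf{n}_K;\mathsf{m}_K=\mathsf{T}(\mathsf{m}_K);\lambda_K;!(\mathsf{n}_K)$.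 *)

(* Defs.v *)
(* Composition is
   written in diagrammatic order: f ;; g means "first f, then g". *)

Record CatData := {
  ob : Type;
  hom : ob -> ob -> Type;
  idm : forall A, hom A A;
  comp : forall A B C, hom A B -> hom B C -> hom A C;
  tob : ob -> ob -> ob;
  tens : forall A B C D, hom A B -> hom C D -> hom (tob A C) (tob B D);
  unitob : ob;
  (* associator alpha_{A,B,C} : A (x) (B (x) C) -> (A (x) B) (x) C
     (the direction used by the paper, cf. the formula for mu) *)
  assoc : forall A B C, hom (tob A (tob B C)) (tob (tob A B) C);
  assoc_inv : forall A B C, hom (tob (tob A B) C) (tob A (tob B C));
  lu : forall A, hom (tob unitob A) A;
  lu_inv : forall A, hom A (tob unitob A);
  ru : forall A, hom (tob A unitob) A;
  ru_inv : forall A, hom A (tob A unitob);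
  sym : forall A B, hom (tob A B) (tob B A);
  plus : forall A B, hom A B -> hom A B -> hom A B;
  zero : forall A B, hom A B }.

Arguments hom {c} A B.
Arguments idm {c} A.
Arguments comp {c A B C} f g.
Arguments tob {c} A B.
Arguments tens {c A B C D} f g.
Arguments unitob {c}.
Arguments assoc {c} A B C.
Arguments assoc_inv {c} A B C.
Arguments lu {c} A.
Arguments lu_inv {c} A.
Arguments ru {c} A.
Arguments ru_inv {c} A.
Arguments sym {c} A B.
Arguments plus {c A B} f g.
Arguments zero {c} A B.

Declare Scope cat_scope.
Delimit Scope cat_scope with cat.
Open Scope cat_scope.
Notation "f ;; g" := (comp f g) (at level 45, left associativity) : cat_scope.
Notation "A ⊗ B" := (tob A B) (at level 38, left associativity) : cat_scope.
Notation "f ⊠ g" := (tens f g) (at level 38, left associativity) : cat_scope.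
Notation "f ⊕ g" := (plus f g) (at level 50, left associativity) : cat_scope.

(* The axioms of an additive symmetric monoidal category
   (hom-sets are commutative monoids, no negatives). *)
Record ASMC_axioms (C : CatData) : Prop := {
  comp_idl : forall (A B : ob C) (f : hom A B), idm A ;; f = f;
  comp_idr : forall (A B : ob C) (f : hom A B), f ;; idm B = f;
  comp_assoc : forall (A B D E : ob C) (f : hom A B) (g : hom B D) (h : hom D E),
      (f ;; g) ;; h = f ;; (g ;; h);
  tens_id : forall A B : ob C, idm A ⊠ idm B = idm (A ⊗ B);
  tens_comp : forall (A1 A2 A3 B1 B2 B3 : ob C) (f : hom A1 A2) (f' : hom A2 A3)
      (g : hom B1 B2) (g' : hom B2 B3), (f ;; f') ⊠ (g ;; g') = (f ⊠ g) ;; (f' ⊠ g');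
  assoc_nat : forall (A A' B B' D D' : ob C) (f : hom A A') (g : hom B B') (h : hom D D'),
      (f ⊠ (g ⊠ h)) ;; assoc A' B' D' = assoc A B D ;; ((f ⊠ g) ⊠ h);
  lu_nat : forall (A B : ob C) (f : hom A B), (idm unitob ⊠ f) ;; lu B = lu A ;; f;
  ru_nat : forall (A B : ob C) (f : hom A B), (f ⊠ idm unitob) ;; ru B = ru A ;; f;
  sym_nat : forall (A A' B B' : ob C) (f : hom A A') (g : hom B B'),
      (f ⊠ g) ;; sym A' B' = sym A B ;; (g ⊠ f);
  assoc_iso1 : forall A B D : ob C, assoc A B D ;; assoc_inv A B D = idm _;
  assoc_iso2 : forall A B D : ob C, assoc_inv A B D ;; assoc A B D = idm _;
  lu_iso1 : forall A : ob C, lu A ;; lu_inv A = idm _;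
  lu_iso2 : forall A : ob C, lu_inv A ;; lu A = idm _;
  ru_iso1 : forall A : ob C, ru A ;; ru_inv A = idm _;
  ru_iso2 : forall A : ob C, ru_inv A ;; ru A = idm _;
  sym_inv : forall A B : ob C, sym A B ;; sym B A = idm _;
  pentagon : forall A B D E : ob C,
      assoc A B (D ⊗ E) ;; assoc (A ⊗ B) D E
      = (idm A ⊠ assoc B D E) ;; assoc A (B ⊗ D) E ;; (assoc A B D ⊠ idm E);
  triangle : forall A B : ob C,
      assoc A unitob B ;; (ru A ⊠ idm B) = idm A ⊠ lu B;
  hexagon : forall A B D : ob C,
      assoc A B D ;; sym (A ⊗ B) D ;; assoc D A B
      = (idm A ⊠ sym B D) ;; assoc A D B ;; (sym A D ⊠ idm B);
  plus_assoc : forall (A B : ob C) (f g h : hom A B), (f ⊕ g) ⊕ h = f ⊕ (g ⊕ h);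
  plus_comm : forall (A B : ob C) (f g : hom A B), f ⊕ g = g ⊕ f;
  plus_zero : forall (A B : ob C) (f : hom A B), f ⊕ zero A B = f;
  comp_plusl : forall (A B D : ob C) (f g : hom A B) (h : hom B D),
      (f ⊕ g) ;; h = (f ;; h) ⊕ (g ;; h);
  comp_plusr : forall (A B D : ob C) (h : hom A B) (f g : hom B D),
      h ;; (f ⊕ g) = (h ;; f) ⊕ (h ;; g);
  comp_zerol : forall (A B D : ob C) (h : hom B D), zero A B ;; h = zero A D;
  comp_zeror : forall (A B D : ob C) (h : hom A B), h ;; zero B D = zero A D;
  tens_plusl : forall (A B A' B' : ob C) (f g : hom A B) (h : hom A' B'),
      (f ⊕ g) ⊠ h = (f ⊠ h) ⊕ (g ⊠ h);
  tens_plusr : forall (A B A' B' : ob C) (h : hom A B) (f g : hom A' B'),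
      h ⊠ (f ⊕ g) = (h ⊠ f) ⊕ (h ⊠ g);
  tens_zerol : forall (A B A' B' : ob C) (h : hom A' B'),
      zero A B ⊠ h = zero (A ⊗ A') (B ⊗ B');
  tens_zeror : forall (A B A' B' : ob C) (h : hom A B),
      h ⊠ zero A' B' = zero (A ⊗ A') (B ⊗ B') }.

Record ASMC := { asmc_data :> CatData; asmc_ax : ASMC_axioms asmc_data }.

Definition tau {C : CatData} (A B D E : ob C)
  : hom ((A ⊗ B) ⊗ (D ⊗ E)) ((A ⊗ D) ⊗ (B ⊗ E)) :=
  assoc_inv A B (D ⊗ E) ;; (idm A ⊠ assoc B D E) ;; (idm A ⊠ (sym B D ⊠ idm E))
  ;; (idm A ⊠ assoc_inv D B E) ;; assoc A D (B ⊗ E).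

Record MCMData (C : CatData) := {
  bo : ob C -> ob C;
  bm : forall A B, hom A B -> hom (bo A) (bo B);
  dlt : forall A, hom (bo A) (bo (bo A));
  eps : forall A, hom (bo A) A;
  mm : forall A B, hom (bo A ⊗ bo B) (bo (A ⊗ B));
  mK : hom unitob (bo unitob);
  Dl : forall A, hom (bo A) (bo A ⊗ bo A);
  ee : forall A, hom (bo A) unitob }.

Arguments bo {C} m A.
Arguments bm {C} m {A B} f.
Arguments dlt {C} m A.
Arguments eps {C} m A.
Arguments mm {C} m A B.
Arguments mK {C} m.
Arguments Dl {C} m A.
Arguments ee {C} m A.

Record MCM_axioms (C : CatData) (M : MCMData C) : Prop := {
  bm_id : forall A, bm M (idm A) = idm (bo M A);
  bm_comp : forall (A B D : ob C) (f : hom A B) (g : hom B D),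
      bm M (f ;; g) = bm M f ;; bm M g;
  dlt_nat : forall (A B : ob C) (f : hom A B),
      dlt M A ;; bm M (bm M f) = bm M f ;; dlt M B;
  eps_nat : forall (A B : ob C) (f : hom A B), eps M A ;; f = bm M f ;; eps M B;
  comonad_counit1 : forall A, dlt M A ;; eps M (bo M A) = idm (bo M A);
  comonad_counit2 : forall A, dlt M A ;; bm M (eps M A) = idm (bo M A);
  comonad_coassoc : forall A, dlt M A ;; dlt M (bo M A) = dlt M A ;; bm M (dlt M A);
  mm_nat : forall (A A' B B' : ob C) (f : hom A A') (g : hom B B'),
      (bm M f ⊠ bm M g) ;; mm M A' B' = mm M A B ;; bm M (f ⊠ g);
  mm_assoc : forall A B D : ob C,
      (idm (bo M A) ⊠ mm M B D) ;; mm M A (B ⊗ D) ;; bm M (assoc A B D)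
      = assoc (bo M A) (bo M B) (bo M D) ;; (mm M A B ⊠ idm (bo M D)) ;; mm M (A ⊗ B) D;
  mm_lunit : forall A : ob C,
      (mK M ⊠ idm (bo M A)) ;; mm M unitob A ;; bm M (lu A) = lu (bo M A);
  mm_runit : forall A : ob C,
      (idm (bo M A) ⊠ mK M) ;; mm M A unitob ;; bm M (ru A) = ru (bo M A);
  mm_sym : forall A B : ob C,
      sym (bo M A) (bo M B) ;; mm M B A = mm M A B ;; bm M (sym A B);
  dlt_mon : forall A B : ob C,
      mm M A B ;; dlt M (A ⊗ B)
      = (dlt M A ⊠ dlt M B) ;; mm M (bo M A) (bo M B) ;; bm M (mm M A B);
  dlt_monK : mK M ;; dlt M unitob = mK M ;; bm M (mK M);
  eps_mon : forall A B : ob C, mm M A B ;; eps M (A ⊗ B) = eps M A ⊠ eps M B;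
  eps_monK : mK M ;; eps M unitob = idm unitob;
  Dl_nat : forall (A B : ob C) (f : hom A B),
      bm M f ;; Dl M B = Dl M A ;; (bm M f ⊠ bm M f);
  ee_nat : forall (A B : ob C) (f : hom A B), bm M f ;; ee M B = ee M A;
  comonoid_coassoc : forall A : ob C,
      Dl M A ;; (idm (bo M A) ⊠ Dl M A) ;; assoc _ _ _ = Dl M A ;; (Dl M A ⊠ idm (bo M A));
  comonoid_lcounit : forall A : ob C,
      Dl M A ;; (ee M A ⊠ idm (bo M A)) ;; lu (bo M A) = idm (bo M A);
  comonoid_rcounit : forall A : ob C,
      Dl M A ;; (idm (bo M A) ⊠ ee M A) ;; ru (bo M A) = idm (bo M A);
  comonoid_cocomm : forall A : ob C, Dl M A ;; sym (bo M A) (bo M A) = Dl M A;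
  dlt_Dl : forall A : ob C, dlt M A ;; Dl M (bo M A) = Dl M A ;; (dlt M A ⊠ dlt M A);
  dlt_ee : forall A : ob C, dlt M A ;; ee M (bo M A) = ee M A;
  Dl_mon : forall A B : ob C,
      mm M A B ;; Dl M (A ⊗ B)
      = (Dl M A ⊠ Dl M B) ;; tau _ _ _ _ ;; (mm M A B ⊠ mm M A B);
  Dl_monK : mK M ;; Dl M unitob = lu_inv unitob ;; (mK M ⊠ mK M);
  ee_mon : forall A B : ob C, mm M A B ;; ee M (A ⊗ B) = (ee M A ⊠ ee M B) ;; lu unitob;
  ee_monK : mK M ;; ee M unitob = idm unitob;
  Dl_coalg : forall A : ob C,
      Dl M A ;; (dlt M A ⊠ dlt M A) ;; mm M (bo M A) (bo M A) = dlt M A ;; bm M (Dl M A);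
  ee_coalg : forall A : ob C, ee M A ;; mK M = dlt M A ;; bm M (ee M A) }.

Record MCM (C : CatData) := { mcm_data :> MCMData C; mcm_ax : MCM_axioms C mcm_data }.

Record sym_comonoidal_monad (C : CatData) (T : ob C -> ob C)
    (Tm : forall A B, hom A B -> hom (T A) (T B))
    (mu : forall X, hom (T (T X)) (T X)) (eta : forall X, hom X (T X))
    (n : forall X Y, hom (T (X ⊗ Y)) (T X ⊗ T Y)) (nK : hom (T unitob) unitob) : Prop := {
  T_id : forall X, Tm X X (idm X) = idm (T X);
  T_comp : forall (X Y Z : ob C) (f : hom X Y) (g : hom Y Z),
      Tm X Z (f ;; g) = Tm X Y f ;; Tm Y Z g;
  mu_nat : forall (X Y : ob C) (f : hom X Y),
      Tm _ _ (Tm _ _ f) ;; mu Y = mu X ;; Tm _ _ f;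
  eta_nat : forall (X Y : ob C) (f : hom X Y), f ;; eta Y = eta X ;; Tm _ _ f;
  monad_assoc : forall X, Tm _ _ (mu X) ;; mu X = mu (T X) ;; mu X;
  monad_unit1 : forall X, eta (T X) ;; mu X = idm (T X);
  monad_unit2 : forall X, Tm _ _ (eta X) ;; mu X = idm (T X);
  n_nat : forall (X X' Y Y' : ob C) (f : hom X X') (g : hom Y Y'),
      Tm _ _ (f ⊠ g) ;; n X' Y' = n X Y ;; (Tm _ _ f ⊠ Tm _ _ g);
  n_coassoc : forall X Y Z : ob C,
      Tm _ _ (assoc X Y Z) ;; n (X ⊗ Y) Z ;; (n X Y ⊠ idm (T Z))
      = n X (Y ⊗ Z) ;; (idm (T X) ⊠ n Y Z) ;; assoc (T X) (T Y) (T Z);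
  n_lcounit : forall X : ob C,
      n unitob X ;; (nK ⊠ idm (T X)) ;; lu (T X) = Tm _ _ (lu X);
  n_rcounit : forall X : ob C,
      n X unitob ;; (idm (T X) ⊠ nK) ;; ru (T X) = Tm _ _ (ru X);
  n_sym : forall X Y : ob C, n X Y ;; sym (T X) (T Y) = Tm _ _ (sym X Y) ;; n Y X;
  mu_comon : forall X Y : ob C,
      mu (X ⊗ Y) ;; n X Y = Tm _ _ (n X Y) ;; n (T X) (T Y) ;; (mu X ⊠ mu Y);
  mu_comonK : mu unitob ;; nK = Tm _ _ nK ;; nK;
  eta_comon : forall X Y : ob C, eta (X ⊗ Y) ;; n X Y = eta X ⊠ eta Y;
  eta_comonK : eta unitob ;; nK = idm unitob }.

Record exponential_lifting_monad (C : CatData) (M : MCMData C) (T : ob C -> ob C)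
    (Tm : forall A B, hom A B -> hom (T A) (T B))
    (mu : forall X, hom (T (T X)) (T X)) (eta : forall X, hom X (T X))
    (n : forall X Y, hom (T (X ⊗ Y)) (T X ⊗ T Y)) (nK : hom (T unitob) unitob)
    (lam : forall X, hom (T (bo M X)) (bo M (T X))) : Prop := {
  elm_scm : sym_comonoidal_monad C T Tm mu eta n nK;
  lam_nat : forall (X Y : ob C) (f : hom X Y),
      Tm _ _ (bm M f) ;; lam Y = lam X ;; bm M (Tm _ _ f);
  lam_mu : forall X, mu (bo M X) ;; lam X = Tm _ _ (lam X) ;; lam (T X) ;; bm M (mu X);
  lam_eta : forall X, eta (bo M X) ;; lam X = bm M (eta X);
  lam_dlt : forall X,
      Tm _ _ (dlt M X) ;; lam (bo M X) ;; bm M (lam X) = lam X ;; dlt M (T X);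
  lam_eps : forall X, lam X ;; eps M (T X) = Tm _ _ (eps M X);
  lam_mm : forall X Y,
      n (bo M X) (bo M Y) ;; (lam X ⊠ lam Y) ;; mm M (T X) (T Y)
      = Tm _ _ (mm M X Y) ;; lam (X ⊗ Y) ;; bm M (n X Y);
  lam_mK : nK ;; mK M = Tm _ _ (mK M) ;; lam unitob ;; bm M nK }.

Section Prop75Data.
Context {C : CatData} (M : MCMData C) (A : ob C).

Definition nablaA : hom (bo M A ⊗ bo M A) (bo M A) :=
  (dlt M A ⊠ dlt M A) ;; mm M (bo M A) (bo M A)
  ;; bm M (((eps M A ⊠ ee M A) ;; ru A) ⊕ ((ee M A ⊠ eps M A) ;; lu A)).

Definition uA : hom unitob (bo M A) := mK M ;; bm M (zero unitob A).

Definition TA (X : ob C) : ob C := bo M A ⊗ X.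
Definition TmA (X Y : ob C) (f : hom X Y) : hom (TA X) (TA Y) := idm (bo M A) ⊠ f.
Definition muA (X : ob C) : hom (TA (TA X)) (TA X) :=
  assoc (bo M A) (bo M A) X ;; (nablaA ⊠ idm X).
Definition etaA (X : ob C) : hom X (TA X) := lu_inv X ;; (uA ⊠ idm X).
Definition nA (X Y : ob C) : hom (TA (X ⊗ Y)) (TA X ⊗ TA Y) :=
  (Dl M A ⊠ idm (X ⊗ Y)) ;; tau (bo M A) (bo M A) X Y.
Definition nKA : hom (TA unitob) unitob := ru (bo M A) ;; ee M A.
Definition lamA (X : ob C) : hom (TA (bo M X)) (bo M (TA X)) :=
  (dlt M A ⊠ idm (bo M X)) ;; mm M (bo M A) X.
End Prop75Data.

Arguments mcm_data {C} m.
Arguments mcm_ax {C} m.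

(* Main.v *)
Require Import Defs.

Section Base.
Variable C : ASMC.
Local Notation ax := (asmc_ax C).
Local Notation O := (ob C).

Lemma idl {A B : O} (f : hom A B) : idm A ;; f = f. Proof. apply (comp_idl _ ax). Qed.
Lemma idr {A B : O} (f : hom A B) : f ;; idm B = f. Proof. apply (comp_idr _ ax). Qed.
Lemma cA {A B D E : O} (f : hom A B) (g : hom B D) (h : hom D E) : (f ;; g) ;; h = f ;; (g ;; h).
Proof. apply (comp_assoc _ ax). Qed.
Lemma tid (A B : O) : idm A ⊠ idm B = idm (A ⊗ B). Proof. apply (tens_id _ ax). Qed.
Lemma tc {A1 A2 A3 B1 B2 B3 : O} (f : hom A1 A2) (f' : hom A2 A3) (g : hom B1 B2) (g' : hom B2 B3) :
  (f ;; f') ⊠ (g ;; g') = (f ⊠ g) ;; (f' ⊠ g'). Proof. apply (tens_comp _ ax). Qed.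
Lemma an {A A' B B' D D' : O} (f : hom A A') (g : hom B B') (h : hom D D') :
  (f ⊠ (g ⊠ h)) ;; assoc A' B' D' = assoc A B D ;; ((f ⊠ g) ⊠ h). Proof. apply (assoc_nat _ ax). Qed.
Lemma lun {A B : O} (f : hom A B) : (idm unitob ⊠ f) ;; lu B = lu A ;; f. Proof. apply (lu_nat _ ax). Qed.
Lemma run {A B : O} (f : hom A B) : (f ⊠ idm unitob) ;; ru B = ru A ;; f. Proof. apply (ru_nat _ ax). Qed.
Lemma sn {A A' B B' : O} (f : hom A A') (g : hom B B') : (f ⊠ g) ;; sym A' B' = sym A B ;; (g ⊠ f).
Proof. apply (sym_nat _ ax). Qed.
Lemma ai1 (A B D : O) : assoc A B D ;; assoc_inv A B D = idm _. Proof. apply (assoc_iso1 _ ax). Qed.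
Lemma ai2 (A B D : O) : assoc_inv A B D ;; assoc A B D = idm _. Proof. apply (assoc_iso2 _ ax). Qed.
Lemma li1 (A : O) : lu A ;; lu_inv A = idm _. Proof. apply (lu_iso1 _ ax). Qed.
Lemma li2 (A : O) : lu_inv A ;; lu A = idm _. Proof. apply (lu_iso2 _ ax). Qed.
Lemma ri1 (A : O) : ru A ;; ru_inv A = idm _. Proof. apply (ru_iso1 _ ax). Qed.
Lemma ri2 (A : O) : ru_inv A ;; ru A = idm _. Proof. apply (ru_iso2 _ ax). Qed.
Lemma si (A B : O) : sym A B ;; sym B A = idm _. Proof. apply (sym_inv _ ax). Qed.
Lemma pent (A B D E : O) : assoc A B (D ⊗ E) ;; assoc (A ⊗ B) D E
      = (idm A ⊠ assoc B D E) ;; assoc A (B ⊗ D) E ;; (assoc A B D ⊠ idm E). Proof. apply (pentagon _ ax). Qed.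
Lemma tri (A B : O) : assoc A unitob B ;; (ru A ⊠ idm B) = idm A ⊠ lu B. Proof. apply (triangle _ ax). Qed.
Lemma hex (A B D : O) : assoc A B D ;; sym (A ⊗ B) D ;; assoc D A B
      = (idm A ⊠ sym B D) ;; assoc A D B ;; (sym A D ⊠ idm B). Proof. apply (hexagon _ ax). Qed.

Lemma lift {A B D : O} {f : hom A B} {g : hom B D} {h : hom A D} :
  f ;; g = h -> forall (E : O) (k : hom D E), f ;; (g ;; k) = h ;; k.
Proof. intros H E k. rewrite <- cA, H. reflexivity. Qed.

End Base.

Arguments idl {C A B} f.
Arguments idr {C A B} f.
Arguments cA {C A B D E} f g h.
Arguments tid {C} A B.
Arguments tc {C A1 A2 A3 B1 B2 B3} f f' g g'.
Arguments an {C A A' B B' D D'} f g h.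
Arguments lun {C A B} f.
Arguments run {C A B} f.
Arguments sn {C A A' B B'} f g.
Arguments ai1 {C} A B D.
Arguments ai2 {C} A B D.
Arguments li1 {C} A.
Arguments li2 {C} A.
Arguments ri1 {C} A.
Arguments ri2 {C} A.
Arguments si {C} A B.
Arguments pent {C} A B D E.
Arguments tri {C} A B.
Arguments hex {C} A B D.
Arguments lift {C A B D f g h} _ {E} k.

Ltac ra := repeat rewrite cA.

Section Base2.
Variable C : ASMC.
Local Notation O := (ob C).

Lemma lift3 {A B D E : O} {f : hom A B} {g : hom B D} {h : hom D E} {r : hom A E} :
  f ;; (g ;; h) = r -> forall (F : O) (k : hom E F), f ;; (g ;; (h ;; k)) = r ;; k.
Proof. intros H F k. rewrite <- (cA g h k), <- (cA f (g;;h) k), H. reflexivity. Qed.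
Lemma lift4 {A B D E G : O} {f : hom A B} {g : hom B D} {h : hom D E} {i : hom E G} {r : hom A G} :
  f ;; (g ;; (h ;; i)) = r -> forall (F : O) (k : hom G F), f ;; (g ;; (h ;; (i ;; k))) = r ;; k.
Proof. intros H F k. rewrite <- (cA h i k), <- (cA g (h;;i) k), <- (cA f (g;;(h;;i)) k), H. reflexivity. Qed.
Lemma lift5 {A B D E G H : O} {f : hom A B} {g : hom B D} {h : hom D E} {i : hom E G} {j : hom G H} {r : hom A H} :
  f ;; (g ;; (h ;; (i ;; j))) = r -> forall (F : O) (k : hom H F), f ;; (g ;; (h ;; (i ;; (j ;; k)))) = r ;; k.
Proof. intros Hy F k. rewrite <- (cA i j k), <- (cA h (i;;j) k), <- (cA g (h;;(i;;j)) k), <- (cA f (g;;(h;;(i;;j))) k), Hy. reflexivity. Qed.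

Lemma epi_canc {A B D : O} (i : hom B D) (j : hom D B) (H : i ;; j = idm B) (f g : hom A B) :
  f ;; i = g ;; i -> f = g.
Proof. intro E. rewrite <- (idr f), <- (idr g), <- H, <- !cA, E. reflexivity. Qed.
Lemma mono_canc {A B D : O} (i : hom A B) (j : hom B A) (H : j ;; i = idm B) (f g : hom B D) :
  i ;; f = i ;; g -> f = g.
Proof. intro E. rewrite <- (idl f), <- (idl g), <- H, !cA, E. reflexivity. Qed.

Lemma canc_lK {A B : O} (f g : hom A B) : idm unitob ⊠ f = idm unitob ⊠ g -> f = g.
Proof.
  intro E. apply (mono_canc (lu A) (lu_inv A) (li2 A)).
  rewrite <- !lun, E. reflexivity.
Qed.
Lemma canc_rK {A B : O} (f g : hom A B) : f ⊠ idm unitob = g ⊠ idm unitob -> f = g.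
Proof.
  intro E. apply (mono_canc (ru A) (ru_inv A) (ri2 A)).
  rewrite <- !run, E. reflexivity.
Qed.
End Base2.
Arguments lift3 {C A B D E f g h r} _ {F} k.
Arguments lift4 {C A B D E G f g h i r} _ {F} k.
Arguments lift5 {C A B D E G H f g h i j r} _ {F} k.

Ltac inst H := lazymatch type of H with
  | forall _, _ => let H2 := fresh in epose proof (H _) as H2; clear H; rename H2 into H; inst H
  | _ => idtac end.
Ltac rwf H := first [ rewrite (@id _ H) | rewrite (lift H) | rewrite (lift3 H) | rewrite (lift4 H) | rewrite (lift5 H)].
Ltac rwbf H := first [ rewrite (eq_sym H) | rewrite (lift (eq_sym H)) | rewrite (lift3 (eq_sym H)) | rewrite (lift4 (eq_sym H)) | rewrite (lift5 (eq_sym H))].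
Ltac rwfi H P := first [ rewrite (@id _ H) in P | rewrite (lift H) in P | rewrite (lift3 H) in P | rewrite (lift4 H) in P | rewrite (lift5 H) in P].
Ltac rwbfi H P := first [ rewrite (eq_sym H) in P | rewrite (lift (eq_sym H)) in P | rewrite (lift3 (eq_sym H)) in P | rewrite (lift4 (eq_sym H)) in P | rewrite (lift5 (eq_sym H)) in P].
Tactic Notation "rw" open_constr(H) := let H' := fresh "Hrw" in epose proof H as H'; inst H'; rwf H'; clear H'; ra.
Tactic Notation "rwb" open_constr(H) := let H' := fresh "Hrw" in epose proof H as H'; inst H'; rwbf H'; clear H'; ra.
Tactic Notation "rw" open_constr(H) "in" hyp(P) := let H' := fresh "Hrw" in epose proof H as H'; inst H'; rwfi H' P; clear H'; repeat rewrite cA in P.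
Tactic Notation "rwb" open_constr(H) "in" hyp(P) := let H' := fresh "Hrw" in epose proof H as H'; inst H'; rwbfi H' P; clear H'; repeat rewrite cA in P.
Arguments epi_canc {C A B D} i j H f g _.
Arguments mono_canc {C A B D} i j H f g _.
Arguments canc_lK {C A B} f g _.
Arguments canc_rK {C A B} f g _.
Section K.
Context {C : ASMC}.
Local Notation O := (ob C).
Lemma iso_tl {A B D : O} (i : hom B D) (j : hom D B) (H : j ;; i = idm D) : (idm A ⊠ j) ;; (idm A ⊠ i) = idm _.
Proof. rewrite <- tc, H, idl, tid. reflexivity. Qed.
Lemma iso_tr {A B D : O} (i : hom B D) (j : hom D B) (H : j ;; i = idm D) : (j ⊠ idm A) ;; (i ⊠ idm A) = idm _.
Proof. rewrite <- tc, H, idl, tid. reflexivity. Qed.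

Lemma K3 (A B : O) : assoc A B unitob ;; ru (A ⊗ B) = idm A ⊠ ru B.
Proof.
  apply canc_rK.
  apply (mono_canc (assoc A (B ⊗ unitob) unitob) _ (ai2 _ _ _)).
  apply (mono_canc (idm A ⊠ assoc B unitob unitob) _ (iso_tl _ _ (ai2 _ _ _))).
  pose proof (f_equal (fun h => h ;; (ru (A ⊗ B) ⊠ idm unitob)) (pent A B unitob unitob)) as P.
  simpl in P. repeat rewrite cA in P. rw tri in P. rewrite <- (tid A B) in P. rewrite <- an in P.
  rewrite <- tri in P. rewrite <- (idl (idm A)) in P. rewrite tc in P. rewrite cA in P. rewrite an in P.
  rewrite <- tc, idl in P. rewrite idl in P. symmetry. exact P.
Qed.
End K.
Section K2.
Context {C : ASMC}.
Local Notation O := (ob C).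
Lemma K1 (A B : O) : assoc unitob A B ;; (lu A ⊠ idm B) = lu (A ⊗ B).
Proof.
  apply canc_lK. apply (epi_canc (assoc _ _ _) (assoc_inv _ _ _) (ai1 _ _ _)).
  pose proof (f_equal (fun h => h ;; ((ru unitob ⊠ idm A) ⊠ idm B)) (pent unitob unitob A B)) as P.
  simpl in P. repeat rewrite cA in P. rewrite <- an in P. rewrite tid in P. rewrite <- tc, idl in P.
  rw tri in P. rw tri in P. rewrite <- an in P. rwb tc in P. rewrite idl in P. rewrite P. reflexivity.
Qed.
Lemma luKK : lu (@unitob C ⊗ unitob) = idm unitob ⊠ lu unitob.
Proof. apply (epi_canc (lu unitob) (lu_inv _) (li1 _)). rewrite lun. reflexivity. Qed.
Lemma K2 : lu (@unitob C) = ru unitob.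
Proof.
  apply canc_rK. apply (mono_canc (assoc unitob unitob unitob) _ (ai2 _ _ _)).
  rewrite K1, tri, luKK. reflexivity.
Qed.
Lemma S1 (D : O) : sym unitob D ;; ru D = lu D.
Proof.
  apply canc_lK. apply (epi_canc (sym unitob D) (sym D unitob) (si _ _)).
  pose proof (f_equal (fun h => h ;; ru (D ⊗ unitob)) (hex unitob unitob D)) as P.
  simpl in P. repeat rewrite cA in P. rw K3 in P. rwb sn in P. rw tri in P.

  rewrite run in P. rw K3 in P. rwb tc in P. rewrite idl in P. rewrite P. reflexivity.
Qed.
Lemma S1' (D : O) : sym D unitob ;; lu D = ru D.
Proof. rewrite <- S1. rw si. apply idl. Qed.
End K2.
Ltac cancel_step := first [ rw ai1 | rw ai2 | rw li1 | rw li2 | rw ri1 | rw ri2 | rw si | rewrite idl | rewrite idr ].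
Ltac cancel := ra; repeat cancel_step.
Ltac mergeT := repeat rwb tc.

Section H.
Context {C : ASMC}.
Local Notation O := (ob C).
Lemma hexr (A B D : O) : assoc A B D ;; (sym (A ⊗ B) D ;; assoc D A B)
      = (idm A ⊠ sym B D) ;; (assoc A D B ;; (sym A D ⊠ idm B)).
Proof. pose proof (hex A B D) as P. ra. repeat rewrite cA in P. exact P. Qed.
Lemma hexs (A B D : O) : sym (A ⊗ B) D = assoc_inv A B D ;; ((idm A ⊠ sym B D) ;; (assoc A D B ;; ((sym A D ⊠ idm B) ;; assoc_inv D A B))).
Proof.
  apply (mono_canc (assoc A B D) (assoc_inv A B D) (ai2 _ _ _)).
  apply (epi_canc (assoc D A B) (assoc_inv D A B) (ai1 _ _ _)).
  cancel. apply hexr.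
Qed.
Lemma hex2 (A B D : O) : sym A (B ⊗ D) = assoc A B D ;; ((sym A B ⊠ idm D) ;; (assoc_inv B A D ;; ((idm B ⊠ sym A D) ;; assoc B D A))).
Proof.
  transitivity (sym A (B ⊗ D) ;; (sym (B ⊗ D) A ;; (assoc A B D ;; ((sym A B ⊠ idm D) ;; (assoc_inv B A D ;; ((idm B ⊠ sym A D) ;; assoc B D A)))))).
  - rewrite hexs. cancel. rwb tc. rw si. rewrite idl, tid. cancel. rwb tc. rw si. rewrite idl, tid. cancel. reflexivity.
  - rw si. rewrite idl. reflexivity.
Qed.
End H.
From Stdlib Require Import List.
Import ListNotations.

Section L.
Context {C : ASMC}.
Local Notation O := (ob C).

Lemma pentr (A B D E : O) : assoc A B (D ⊗ E) ;; assoc (A ⊗ B) D E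
      = (idm A ⊠ assoc B D E) ;; (assoc A (B ⊗ D) E ;; (assoc A B D ⊠ idm E)).
Proof. rewrite pent. apply cA. Qed.
Lemma pent_inv (A B D E : O) : assoc_inv (A ⊗ B) D E ;; assoc_inv A B (D ⊗ E)
      = (assoc_inv A B D ⊠ idm E) ;; (assoc_inv A (B ⊗ D) E ;; (idm A ⊠ assoc_inv B D E)).
Proof.
  apply (mono_canc (assoc (A ⊗ B) D E) _ (ai2 _ _ _)).
  apply (mono_canc (assoc A B (D ⊗ E)) _ (ai2 _ _ _)).
  cancel. rw pentr. cancel. rwb tc. rw ai1. rewrite idl, tid. cancel. rwb tc. rw ai1. rewrite idl, tid. reflexivity.
Qed.

Definition beta (a b X : O) : hom (a ⊗ (b ⊗ X)) (b ⊗ (a ⊗ X)) :=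
  assoc a b X ;; ((sym a b ⊠ idm X) ;; assoc_inv b a X).

Lemma ainv_nat {A A' B B' D D' : O} (f : hom A A') (g : hom B B') (h : hom D D') :
  ((f ⊠ g) ⊠ h) ;; assoc_inv A' B' D' = assoc_inv A B D ;; (f ⊠ (g ⊠ h)).
Proof.
  apply (mono_canc (assoc A B D) _ (ai2 _ _ _)). rwb an. cancel. reflexivity.
Qed.

Lemma beta_nat3 (a b : O) {X Y : O} (g : hom X Y) :
  (idm a ⊠ (idm b ⊠ g)) ;; beta a b Y = beta a b X ;; (idm b ⊠ (idm a ⊠ g)).
Proof.
  unfold beta. rw an. rewrite tid. rwb tc. rewrite idl, idr.
  rwb ainv_nat. rewrite tid. rwb tc. rewrite idl, idr. reflexivity.
Qed.
Lemma pent_inv' (A B D E : O) : assoc_inv A (B ⊗ D) E ;; (idm A ⊠ assoc_inv B D E)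
   = (assoc A B D ⊠ idm E) ;; (assoc_inv (A ⊗ B) D E ;; assoc_inv A B (D ⊗ E)).
Proof.
  apply (mono_canc (assoc_inv A B D ⊠ idm E) (assoc A B D ⊠ idm E)). { rewrite <- tc, ai1, idl, tid. reflexivity. }
  rewrite pent_inv. ra. rwb tc. rw ai2. rewrite idl, tid, idl. reflexivity.
Qed.

Lemma AB (a b R L : O) :
  (beta a b R ⊠ idm L) ;; (assoc_inv b (a ⊗ R) L ;; (idm b ⊠ assoc_inv a R L))
  = assoc_inv a (b ⊗ R) L ;; ((idm a ⊠ assoc_inv b R L) ;; beta a b (R ⊗ L)).
Proof.
  unfold beta. rw pent_inv'. rw pent_inv'. rw ai2. rewrite idl.
  rewrite <- (tid R L). rwb ainv_nat. rwb tc. rw ai2. rewrite idr, idl. rwb tc. rewrite idl. reflexivity.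
Qed.
End L.
From Stdlib Require Import List.
Import ListNotations.

Section L2.
Context {C : ASMC}.
Local Notation O := (ob C).

Fixpoint Lint (l : list O) : O := match l with nil => unitob | a :: l => a ⊗ Lint l end.
Fixpoint app_assoc' (l1 l2 l3 : list O) : l1 ++ (l2 ++ l3) = (l1 ++ l2) ++ l3 :=
  match l1 with nil => eq_refl | a :: l => f_equal (cons a) (app_assoc' l l2 l3) end.
Fixpoint app_nil_r' (l : list O) : l ++ nil = l :=
  match l with nil => eq_refl | a :: l => f_equal (cons a) (app_nil_r' l) end.
Definition castm {l l' : list O} (e : l = l') : hom (Lint l) (Lint l') :=
  match e in _ = y return hom (Lint l) (Lint y) with eq_refl => idm _ end.

Fixpoint apl (l1 l2 : list O) : hom (Lint l1 ⊗ Lint l2) (Lint (l1 ++ l2)) :=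
  match l1 with
  | nil => lu (Lint l2)
  | a :: l1 => assoc_inv a (Lint l1) (Lint l2) ;; (idm a ⊠ apl l1 l2)
  end.
Fixpoint apli (l1 l2 : list O) : hom (Lint (l1 ++ l2)) (Lint l1 ⊗ Lint l2) :=
  match l1 with
  | nil => lu_inv (Lint l2)
  | a :: l1 => (idm a ⊠ apli l1 l2) ;; assoc a (Lint l1) (Lint l2)
  end.
Lemma apl_apli l1 l2 : apl l1 l2 ;; apli l1 l2 = idm _.
Proof. induction l1; simpl. apply li1. ra. rwb tc. rewrite IHl1, idl, tid. cancel. reflexivity. Qed.
Lemma apli_apl l1 l2 : apli l1 l2 ;; apl l1 l2 = idm _.
Proof. induction l1; simpl. apply li2. ra. cancel. rewrite <- tc, IHl1, idl, tid. reflexivity. Qed.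

Inductive word : list O -> list O -> Type :=
| wid l : word l l
| wcomp {l1 l2 l3} : word l1 l2 -> word l2 l3 -> word l1 l3
| whs a b r : word (a :: b :: r) (b :: a :: r)
| wcons a {l l'} : word l l' -> word (a :: l) (a :: l')
| wcast {l l'} : l = l' -> word l l'.

Fixpoint W {l l'} (w : word l l') : hom (Lint l) (Lint l') :=
  match w with
  | wid l => idm _
  | wcomp w1 w2 => W w1 ;; W w2
  | whs a b r => beta a b (Lint r)
  | wcons a w => idm a ⊠ W w
  | wcast e => castm e
  end.

Fixpoint rwh {l l'} (w : word l l') (l2 : list O) : word (l ++ l2) (l' ++ l2) :=
  match w with
  | wid l => wid _
  | wcomp w1 w2 => wcomp (rwh w1 l2) (rwh w2 l2)
  | whs a b r => whs a b (r ++ l2)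
  | wcons a w => wcons a (rwh w l2)
  | wcast e => wcast (f_equal (fun x => x ++ l2) e)
  end.
Fixpoint lwh (l1 : list O) {l l'} (w : word l l') : word (l1 ++ l) (l1 ++ l') :=
  match l1 with nil => w | a :: l1 => wcons a (lwh l1 w) end.

Lemma wl {A B D E : O} (f : hom B D) (g : hom D E) : idm A ⊠ (f ;; g) = (idm A ⊠ f) ;; (idm A ⊠ g).
Proof. rewrite <- tc, idl. reflexivity. Qed.
Lemma wr {A B D E : O} (f : hom B D) (g : hom D E) : (f ;; g) ⊠ idm A = (f ⊠ idm A) ;; (g ⊠ idm A).
Proof. rewrite <- tc, idl. reflexivity. Qed.

Lemma RW {l l'} (w : word l l') (l2 : list O) :
  (W w ⊠ idm (Lint l2)) ;; apl l' l2 = apl l l2 ;; W (rwh w l2).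
Proof.
  induction w; simpl.
  - rewrite tid, idl, idr. reflexivity.
  - rewrite <- (idl (idm (Lint l2))), tc. ra. rewrite IHw2. rw IHw1. reflexivity.
  - ra. rewrite !wl. ra. rw beta_nat3. rw AB. reflexivity.
  - ra. rw ainv_nat. rwb tc. rewrite idl, IHw, wl. reflexivity.
  - destruct e. simpl. rewrite tid, idl, idr. reflexivity.
Qed.

Lemma LW (l1 : list O) {l l'} (w : word l l') :
  (idm (Lint l1) ⊠ W w) ;; apl l1 l' = apl l1 l ;; W (lwh l1 w).
Proof.
  induction l1; simpl.
  - apply lun.
  - rewrite <- (tid a (Lint l1)). rw ainv_nat. rwb tc. rewrite idl, IHl1, wl. reflexivity.
Qed.

Lemma castm_cons a {l l' : list O} (e : l = l') : castm (f_equal (cons a) e) = idm a ⊠ castm e.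
Proof. destruct e. simpl. rewrite tid. reflexivity. Qed.

Lemma PQ (a B D E : O) : assoc (a ⊗ B) D E ;; ((assoc_inv a B D ⊠ idm E) ;; assoc_inv a (B ⊗ D) E)
   = assoc_inv a B (D ⊗ E) ;; (idm a ⊠ assoc B D E).
Proof.
  apply (epi_canc (idm a ⊠ assoc_inv B D E) (idm a ⊠ assoc B D E)). { rewrite <- tc, ai2, idl, tid. reflexivity. }
  ra. rewrite pent_inv'. ra. rwb tc. rewrite ai1, idl, tid, idr. rwb tc. rw ai2. rewrite idl, tid, idl. cancel. reflexivity.
Qed.

Lemma G1 (l1 l2 l3 : list O) :
  assoc (Lint l1) (Lint l2) (Lint l3) ;; ((apl l1 l2 ⊠ idm _) ;; apl (l1 ++ l2) l3)
  = (idm _ ⊠ apl l2 l3) ;; (apl l1 (l2 ++ l3) ;; castm (app_assoc' l1 l2 l3)).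
Proof.
  induction l1; simpl.
  - rewrite idr. rw K1. rewrite lun. reflexivity.
  - rewrite castm_cons, wr. ra. rw ainv_nat. rw PQ. rewrite <- (tid a (Lint l1)). rw ainv_nat.
    repeat rwb tc. rewrite !idl. rewrite IHl1. reflexivity.
Qed.
End L2.

Section L3.
Context {C : ASMC}.
Local Notation O := (ob C).
Lemma G2 (l : list O) : apl l nil ;; castm (app_nil_r' l) = ru (Lint l).
Proof.
  induction l; simpl in *.
  - rewrite idr. apply K2.
  - rewrite castm_cons. ra. rwb tc. rewrite idl, IHl. rewrite <- K3. cancel. reflexivity.
Qed.

Fixpoint bubble (a : O) (l2 r : list O) : word (a :: (l2 ++ r)) (l2 ++ a :: r) :=
  match l2 with
  | nil => wid (a :: r)
  | b :: l2 => wcomp (whs a b (l2 ++ r)) (wcons b (bubble a l2 r))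
  end.
Fixpoint ssymW (l1 l2 : list O) : word (l1 ++ l2) (l2 ++ l1) :=
  match l1 with
  | nil => wcast (eq_sym (app_nil_r' l2))
  | a :: l1 => wcomp (wcons a (ssymW l1 l2)) (bubble a l2 l1)
  end.

Lemma K1i (A B : O) : assoc_inv unitob A B ;; lu (A ⊗ B) = lu A ⊠ idm B.
Proof. rewrite <- K1. cancel. reflexivity. Qed.

Lemma pent' (A B D E : O) : assoc A (B ⊗ D) E ;; (assoc A B D ⊠ idm E)
   = (idm A ⊠ assoc_inv B D E) ;; (assoc A B (D ⊗ E) ;; assoc (A ⊗ B) D E).
Proof. rewrite pentr. rwb tc. rw ai2. rewrite idl, tid, idl. reflexivity. Qed.

Lemma BUB (a b L R : O) :
  assoc a (b ⊗ L) R ;; ((sym a (b ⊗ L) ⊠ idm R) ;; (assoc_inv (b ⊗ L) a R ;; assoc_inv b L (a ⊗ R)))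
  = (idm a ⊠ assoc_inv b L R) ;; (beta a b (L ⊗ R) ;; (idm b ⊠ (assoc a L R ;; ((sym a L ⊠ idm R) ;; assoc_inv L a R)))).
Proof.
  rewrite hex2. rewrite !wr. ra. rwb pent_inv'. rw ainv_nat. rw pent'. rwb an. rw PQ.
  unfold beta. rewrite !wl. ra. rewrite tid. reflexivity.
Qed.
Lemma G4 (a : O) (l2 r : list O) :
  assoc a (Lint l2) (Lint r) ;; ((sym a (Lint l2) ⊠ idm (Lint r)) ;; (assoc_inv (Lint l2) a (Lint r) ;; apl l2 (a :: r)))
  = (idm a ⊠ apl l2 r) ;; W (bubble a l2 r).
Proof.
  induction l2; simpl in *.
  - rw K1i. rwb tc. rw S1'. rewrite idl, tri, idr. reflexivity.
  - rw BUB. rwb tc. rewrite idl. rewrite (wl (assoc_inv a0 (Lint l2) (Lint r))). ra. rw beta_nat3.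
    rwb tc. rewrite idl, <- IHl2. ra. reflexivity.
Qed.

Lemma castm_sym {l l' : list O} (e : l = l') : castm e ;; castm (eq_sym e) = idm _.
Proof. destruct e. apply idl. Qed.

Lemma G3 (l1 l2 : list O) :
  sym (Lint l1) (Lint l2) ;; apl l2 l1 = apl l1 l2 ;; W (ssymW l1 l2).
Proof.
  induction l1; simpl in *.
  - rewrite <- (idr (apl l2 [])), <- (castm_sym (app_nil_r' l2)). simpl.
    pose proof (G2 l2) as H. simpl in H. rw H. rw S1. reflexivity.
  - rewrite hexs. ra. rw G4. rwb tc. rewrite idl, IHl1, wl. ra. reflexivity.
Qed.
End L3.
From Stdlib Require Import List.
Import ListNotations.

Section R.
Context {C : ASMC}.
Local Notation O := (ob C).

Inductive oexp := V (a : O) | U | T (e1 e2 : oexp).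
Fixpoint ev (e : oexp) : O := match e with V a => a | U => unitob | T e1 e2 => ev e1 ⊗ ev e2 end.
Fixpoint flat (e : oexp) : list O := match e with V a => [a] | U => [] | T e1 e2 => flat e1 ++ flat e2 end.
Fixpoint can (e : oexp) : hom (ev e) (Lint (flat e)) :=
  match e with
  | V a => ru_inv a
  | U => idm unitob
  | T e1 e2 => (can e1 ⊠ can e2) ;; apl (flat e1) (flat e2)
  end.
Fixpoint cani (e : oexp) : hom (Lint (flat e)) (ev e) :=
  match e with
  | V a => ru a
  | U => idm unitob
  | T e1 e2 => apli (flat e1) (flat e2) ;; (cani e1 ⊠ cani e2)
  end.
Lemma can_cani e : can e ;; cani e = idm _.
Proof.
  induction e; simpl.
  - apply ri2.
  - apply idl.
  - ra. rw apl_apli. rewrite idl, <- tc, IHe1, IHe2, tid. reflexivity.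
Qed.

Inductive mexp : oexp -> oexp -> Type :=
| mid e : mexp e e
| mcomp {e1 e2 e3} : mexp e1 e2 -> mexp e2 e3 -> mexp e1 e3
| mtens {e1 e2 e3 e4} : mexp e1 e2 -> mexp e3 e4 -> mexp (T e1 e3) (T e2 e4)
| mas e1 e2 e3 : mexp (T e1 (T e2 e3)) (T (T e1 e2) e3)
| masi e1 e2 e3 : mexp (T (T e1 e2) e3) (T e1 (T e2 e3))
| mlu e : mexp (T U e) e
| mlui e : mexp e (T U e)
| mru e : mexp (T e U) e
| mrui e : mexp e (T e U)
| msym e1 e2 : mexp (T e1 e2) (T e2 e1).

Fixpoint I {e1 e2} (s : mexp e1 e2) : hom (ev e1) (ev e2) :=
  match s with
  | mid e => idm (ev e)
  | mcomp s t => I s ;; I t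
  | mtens s t => I s ⊠ I t
  | mas e1 e2 e3 => assoc (ev e1) (ev e2) (ev e3)
  | masi e1 e2 e3 => assoc_inv (ev e1) (ev e2) (ev e3)
  | mlu e => lu (ev e)
  | mlui e => lu_inv (ev e)
  | mru e => ru (ev e)
  | mrui e => ru_inv (ev e)
  | msym e1 e2 => sym (ev e1) (ev e2)
  end.

Fixpoint N {e1 e2} (s : mexp e1 e2) : word (flat e1) (flat e2) :=
  match s with
  | mid e => wid _
  | mcomp s t => wcomp (N s) (N t)
  | @mtens e1 e2 e3 e4 s t => wcomp (rwh (N s) (flat e3)) (lwh (flat e2) (N t))
  | mas e1 e2 e3 => wcast (app_assoc' (flat e1) (flat e2) (flat e3))
  | masi e1 e2 e3 => wcast (eq_sym (app_assoc' (flat e1) (flat e2) (flat e3)))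
  | mlu e => wid _
  | mlui e => wid _
  | mru e => wcast (app_nil_r' (flat e))
  | mrui e => wcast (eq_sym (app_nil_r' (flat e)))
  | msym e1 e2 => ssymW (flat e1) (flat e2)
  end.

Lemma lui_nat {A B : O} (f : hom A B) : f ;; lu_inv B = lu_inv A ;; (idm unitob ⊠ f).
Proof. apply (epi_canc (lu B) (lu_inv B) (li1 _)). ra. rewrite lun. cancel. reflexivity. Qed.
Lemma rui_nat {A B : O} (f : hom A B) : f ;; ru_inv B = ru_inv A ;; (f ⊠ idm unitob).
Proof. apply (epi_canc (ru B) (ru_inv B) (ri1 _)). ra. rewrite run. cancel. reflexivity. Qed.

Lemma tsL {A B D E F : O} (f : hom A B) (g : hom B D) (h : hom E F) : (f ;; g) ⊠ h = (f ⊠ h) ;; (g ⊠ idm F).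
Proof. rewrite <- tc, idr. reflexivity. Qed.
Lemma tsR {A B D E F : O} (f : hom E F) (g : hom A B) (h : hom B D) : f ⊠ (g ;; h) = (f ⊠ g) ;; (idm F ⊠ h).
Proof. rewrite <- tc, idr. reflexivity. Qed.

Lemma sound {e1 e2} (s : mexp e1 e2) : I s ;; can e2 = can e1 ;; W (N s).
Proof.
  induction s; simpl.
  - rewrite idl, idr. reflexivity.
  - ra. rewrite IHs2. rw IHs1. reflexivity.
  - rwb tc. rewrite IHs1, IHs2. rewrite tc. ra.
    rewrite <- (idr (W (N s1))), <- (idl (W (N s2))), (tc (W (N s1)) (idm _) (idm _) (W (N s2))). ra.
    rw LW. rw RW. reflexivity.
  - rewrite tsL, tsR. ra. rwb an. rw G1. reflexivity.
  - apply (mono_canc (assoc _ _ _) _ (ai2 _ _ _)). rewrite tsL, tsR. cancel. rwb an. rw G1. rw castm_sym. rewrite idr. reflexivity.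
  - rewrite lun, idr. reflexivity.
  - rewrite idr. rwb lui_nat. cancel. reflexivity.
  - pose proof (G2 (flat e)) as H. simpl in H |- *. ra. rw H. rewrite run. reflexivity.
  - pose proof (G2 (flat e)) as H. simpl in H |- *.
    rwb rui_nat. rewrite <- (idr (apl (flat e) [])), <- (castm_sym (app_nil_r' (flat e))). rw H. cancel. reflexivity.
  - rwb sn. rw G3. reflexivity.
Qed.

Lemma coh {e1 e2} (s t : mexp e1 e2) : W (N s) = W (N t) -> I s = I t.
Proof.
  intro E. rewrite <- (idr (I s)), <- (idr (I t)), <- (can_cani e2). rewrite <- !cA, !sound, E. reflexivity.
Qed.
End R.
From Stdlib Require Import List.
Import ListNotations.

Ltac reify_ob C x :=
  lazymatch x with
  | ?a ⊗ ?b => let ea := reify_ob C a in let eb := reify_ob C b in constr:(@T C ea eb)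
  | unitob => constr:(@U C)
  | _ => constr:(@V C x)
  end.
Ltac reify_m C f :=
  lazymatch f with
  | ?g ;; ?h => let eg := reify_m C g in let eh := reify_m C h in constr:(mcomp eg eh)
  | ?g ⊠ ?h => let eg := reify_m C g in let eh := reify_m C h in constr:(mtens eg eh)
  | assoc ?a ?b ?c => let ea := reify_ob C a in let eb := reify_ob C b in let ec := reify_ob C c in constr:(mas ea eb ec)
  | assoc_inv ?a ?b ?c => let ea := reify_ob C a in let eb := reify_ob C b in let ec := reify_ob C c in constr:(masi ea eb ec)
  | lu ?a => let ea := reify_ob C a in constr:(mlu ea)
  | lu_inv ?a => let ea := reify_ob C a in constr:(mlui ea)
  | ru ?a => let ea := reify_ob C a in constr:(mru ea)
  | ru_inv ?a => let ea := reify_ob C a in constr:(mrui ea)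
  | sym ?a ?b => let ea := reify_ob C a in let eb := reify_ob C b in constr:(msym ea eb)
  | idm ?a => let ea := reify_ob C a in constr:(mid ea)
  end.
Ltac coh := unfold tau; lazymatch goal with |- @eq (@hom (asmc_data ?C) _ _) ?l ?r =>
  let sl := reify_m C l in let sr := reify_m C r in change (I sl = I sr); apply coh; simpl end.

Ltac wnorm := repeat (first [rewrite tid | rewrite idl | rewrite idr | rewrite wl]); ra.

Section T.
Context {C : ASMC}.
Local Notation O := (ob C).
Lemma under {A B D E : O} (W0 : O) {f : hom A B} {g : hom B E} {h : hom A D} {k : hom D E} :
  f ;; g = h ;; k -> (idm W0 ⊠ f) ;; (idm W0 ⊠ g) = (idm W0 ⊠ h) ;; (idm W0 ⊠ k).
Proof. intro H. rewrite <- !tc, H. reflexivity. Qed.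
Lemma bn3 (a b : O) {X Y : O} (g : hom X Y) :
  (idm a ⊠ (idm b ⊠ g)) ;; beta a b Y = beta a b X ;; (idm b ⊠ (idm a ⊠ g)).
Proof. apply beta_nat3. Qed.

Lemma C4 (P Q R X Y Z : O) :
  (assoc P Q R ⊠ assoc X Y Z) ;; tau (P ⊗ Q) R (X ⊗ Y) Z ;; (tau P Q X Y ⊠ idm (R ⊗ Z))
  = tau P (Q ⊗ R) X (Y ⊗ Z) ;; (idm (P ⊗ X) ⊠ tau Q R Y Z) ;; assoc (P ⊗ X) (Q ⊗ Y) (R ⊗ Z).
Proof. coh. wnorm. rw (under _ (bn3 _ _ _)). reflexivity. Qed.
End T.

Section T2.
Context {C : ASMC}.
Local Notation O := (ob C).
Local Notation K := (@unitob C).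

Lemma beta_inv (a b X : O) : beta a b X ;; beta b a X = idm _.
Proof. unfold beta. cancel. rwb tc. rw si. rewrite idl, tid. cancel. reflexivity. Qed.
Lemma under_id {A B : O} (W0 : O) {f : hom A B} {g : hom B A} :
  f ;; g = idm A -> (idm W0 ⊠ f) ;; (idm W0 ⊠ g) = idm _.
Proof. intro H. rewrite <- tc, H, idl, tid. reflexivity. Qed.

Lemma CU1 (B X : O) : tau K B K X ;; (ru K ⊠ idm (B ⊗ X)) ;; lu (B ⊗ X) = lu B ⊠ lu X.
Proof. coh. wnorm. reflexivity. Qed.
Lemma CU2 (B X : O) : tau B K X K ;; (idm (B ⊗ X) ⊠ ru K) ;; ru (B ⊗ X) = ru B ⊠ ru X.
Proof. coh. wnorm. reflexivity. Qed.
Lemma CE (X Y : O) : lu_inv (X ⊗ Y) ;; (lu_inv K ⊠ idm (X ⊗ Y)) ;; tau K K X Y = lu_inv X ⊠ lu_inv Y.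
Proof. coh. wnorm. reflexivity. Qed.
Lemma CK : assoc K K K ;; ru (K ⊗ K) ;; lu K = (idm K ⊠ ru K) ;; ru K.
Proof. coh. wnorm. reflexivity. Qed.
Lemma C3 (P Q X Y : O) : tau P Q X Y ;; sym (P ⊗ X) (Q ⊗ Y) = (sym P Q ⊠ sym X Y) ;; tau Q P Y X.
Proof. coh. wnorm. rw (under_id _ (beta_inv _ _ _)). rewrite idl. rw bn3. reflexivity. Qed.
Lemma C5 (P Q R S X Y : O) :
  assoc (P ⊗ Q) (R ⊗ S) (X ⊗ Y) ;; (tau P Q R S ⊠ idm (X ⊗ Y)) ;; tau (P ⊗ R) (Q ⊗ S) X Y
  = (idm (P ⊗ Q) ⊠ tau R S X Y) ;; tau P Q (R ⊗ X) (S ⊗ Y) ;; (assoc P R X ⊠ assoc Q S Y).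
Proof. coh. wnorm. rw (under _ (bn3 _ _ _)). reflexivity. Qed.
End T2.

Section M1.
Context {C : ASMC}.
Local Notation O := (ob C).
Local Notation K := (@unitob C).
Local Notation ax := (asmc_ax C).

Lemma pA {X Y : O} (f g h : hom X Y) : (f ⊕ g) ⊕ h = f ⊕ (g ⊕ h). Proof. apply (plus_assoc _ ax). Qed.
Lemma pC {X Y : O} (f g : hom X Y) : f ⊕ g = g ⊕ f. Proof. apply (plus_comm _ ax). Qed.
Lemma p0 {X Y : O} (f : hom X Y) : f ⊕ zero X Y = f. Proof. apply (plus_zero _ ax). Qed.
Lemma p0l {X Y : O} (f : hom X Y) : zero X Y ⊕ f = f. Proof. rewrite pC. apply p0. Qed.
Lemma cpl {X Y Z : O} (f g : hom X Y) (h : hom Y Z) : (f ⊕ g) ;; h = (f ;; h) ⊕ (g ;; h). Proof. apply (comp_plusl _ ax). Qed.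
Lemma cpr {X Y Z : O} (h : hom X Y) (f g : hom Y Z) : h ;; (f ⊕ g) = (h ;; f) ⊕ (h ;; g). Proof. apply (comp_plusr _ ax). Qed.
Lemma czl {X Y Z : O} (h : hom Y Z) : zero X Y ;; h = zero X Z. Proof. apply (comp_zerol _ ax). Qed.
Lemma czr {X Y Z : O} (h : hom X Y) : h ;; zero Y Z = zero X Z. Proof. apply (comp_zeror _ ax). Qed.
Lemma tpl {X Y X' Y' : O} (f g : hom X Y) (h : hom X' Y') : (f ⊕ g) ⊠ h = (f ⊠ h) ⊕ (g ⊠ h). Proof. apply (tens_plusl _ ax). Qed.
Lemma tpr {X Y X' Y' : O} (h : hom X Y) (f g : hom X' Y') : h ⊠ (f ⊕ g) = (h ⊠ f) ⊕ (h ⊠ g). Proof. apply (tens_plusr _ ax). Qed.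
Lemma tzl {X Y X' Y' : O} (h : hom X' Y') : zero X Y ⊠ h = zero (X ⊗ X') (Y ⊗ Y'). Proof. apply (tens_zerol _ ax). Qed.
Lemma tzr {X Y X' Y' : O} (h : hom X Y) : h ⊠ zero X' Y' = zero (X ⊗ X') (Y ⊗ Y'). Proof. apply (tens_zeror _ ax). Qed.

Lemma xch {X X' Y Y' : O} (f : hom X X') (g : hom Y Y') : (f ⊠ idm Y) ;; (idm X' ⊠ g) = (idm X ⊠ g) ;; (f ⊠ idm Y').
Proof. rewrite <- !tc, !idl, !idr. reflexivity. Qed.
Lemma sl1 {X X' Y Y' : O} (f : hom X X') (g : hom Y Y') : f ⊠ g = (f ⊠ idm Y) ;; (idm X' ⊠ g).
Proof. rewrite <- tc, idl, idr. reflexivity. Qed.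
Lemma sl2 {X X' Y Y' : O} (f : hom X X') (g : hom Y Y') : f ⊠ g = (idm X ⊠ g) ;; (f ⊠ idm Y').
Proof. rewrite <- tc, idl, idr. reflexivity. Qed.

Lemma beta_nat {b c d b' c' d' : O} (f : hom b b') (g : hom c c') (h : hom d d') :
  (f ⊠ (g ⊠ h)) ;; beta b' c' d' = beta b c d ;; (g ⊠ (f ⊠ h)).
Proof.
  unfold beta. rw an. rwb tc. rewrite sn, idr. rewrite <- (idl h) at 1.
  rewrite tc. ra. rw ainv_nat. reflexivity.
Qed.

Lemma tau_beta (a b c d : O) : tau a b c d = assoc_inv a b (c ⊗ d) ;; ((idm a ⊠ beta b c d) ;; assoc a c (b ⊗ d)).
Proof. unfold tau, beta. rewrite !wl. ra. reflexivity. Qed.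

Lemma TN {a a' b b' c c' d d' : O} (fa : hom a a') (fb : hom b b') (fc : hom c c') (fd : hom d d') :
  ((fa ⊠ fb) ⊠ (fc ⊠ fd)) ;; tau a' b' c' d' = tau a b c d ;; ((fa ⊠ fc) ⊠ (fb ⊠ fd)).
Proof.
  rewrite !tau_beta. rw ainv_nat. rwb tc. rewrite idr. rewrite beta_nat.
  rewrite <- (idl fa) at 1. rewrite tc. ra. rw an. reflexivity.
Qed.
End M1.

Section M2.
Context {C : ASMC} (M : MCM C).
Local Notation O := (ob C).
Local Notation K := (@unitob C).
Local Notation mx := (mcm_ax M).
Local Notation "! f" := (bm M f) (at level 9).
Local Notation B := (bo M).

Lemma bid (X : O) : bm M (idm X) = idm _. Proof. apply (bm_id _ _ mx). Qed.
Lemma bcomp {X Y Z : O} (f : hom X Y) (g : hom Y Z) : bm M (f ;; g) = bm M f ;; bm M g. Proof. apply (bm_comp _ _ mx). Qed.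
Lemma dn {X Y : O} (f : hom X Y) : dlt M X ;; bm M (bm M f) = bm M f ;; dlt M Y. Proof. apply (dlt_nat _ _ mx). Qed.
Lemma en {X Y : O} (f : hom X Y) : eps M X ;; f = bm M f ;; eps M Y. Proof. apply (eps_nat _ _ mx). Qed.
Lemma cu1 (X : O) : dlt M X ;; eps M (B X) = idm _. Proof. apply (comonad_counit1 _ _ mx). Qed.
Lemma cu2 (X : O) : dlt M X ;; bm M (eps M X) = idm _. Proof. apply (comonad_counit2 _ _ mx). Qed.
Lemma cas (X : O) : dlt M X ;; dlt M (B X) = dlt M X ;; bm M (dlt M X). Proof. apply (comonad_coassoc _ _ mx). Qed.
Lemma mn {X X' Y Y' : O} (f : hom X X') (g : hom Y Y') : (bm M f ⊠ bm M g) ;; mm M X' Y' = mm M X Y ;; bm M (f ⊠ g).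
Proof. apply (mm_nat _ _ mx). Qed.
Lemma mA (X Y Z : O) : (idm (B X) ⊠ mm M Y Z) ;; (mm M X (Y ⊗ Z) ;; bm M (assoc X Y Z))
      = assoc (B X) (B Y) (B Z) ;; ((mm M X Y ⊠ idm (B Z)) ;; mm M (X ⊗ Y) Z).
Proof. rewrite <- !cA. apply (mm_assoc _ _ mx). Qed.
Lemma mLu (X : O) : (mK M ⊠ idm (B X)) ;; (mm M K X ;; bm M (lu X)) = lu (B X).
Proof. rewrite <- !cA. apply (mm_lunit _ _ mx). Qed.
Lemma mRu (X : O) : (idm (B X) ⊠ mK M) ;; (mm M X K ;; bm M (ru X)) = ru (B X).
Proof. rewrite <- !cA. apply (mm_runit _ _ mx). Qed.
Lemma mS (X Y : O) : sym (B X) (B Y) ;; mm M Y X = mm M X Y ;; bm M (sym X Y). Proof. apply (mm_sym _ _ mx). Qed.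
Lemma dm (X Y : O) : mm M X Y ;; dlt M (X ⊗ Y) = (dlt M X ⊠ dlt M Y) ;; (mm M (B X) (B Y) ;; bm M (mm M X Y)).
Proof. rewrite (dlt_mon _ _ mx). apply cA. Qed.
Lemma dK : mK M ;; dlt M K = mK M ;; bm M (mK M). Proof. apply (dlt_monK _ _ mx). Qed.
Lemma em (X Y : O) : mm M X Y ;; eps M (X ⊗ Y) = eps M X ⊠ eps M Y. Proof. apply (eps_mon _ _ mx). Qed.
Lemma eK : mK M ;; eps M K = idm K. Proof. apply (eps_monK _ _ mx). Qed.
Lemma Dn {X Y : O} (f : hom X Y) : bm M f ;; Dl M Y = Dl M X ;; (bm M f ⊠ bm M f). Proof. apply (Dl_nat _ _ mx). Qed.
Lemma een {X Y : O} (f : hom X Y) : bm M f ;; ee M Y = ee M X. Proof. apply (ee_nat _ _ mx). Qed.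
Lemma Dca (X : O) : Dl M X ;; ((idm (B X) ⊠ Dl M X) ;; assoc _ _ _) = Dl M X ;; (Dl M X ⊠ idm (B X)).
Proof. rewrite <- cA. apply (comonoid_coassoc _ _ mx). Qed.
Lemma Dlc (X : O) : Dl M X ;; ((ee M X ⊠ idm (B X)) ;; lu (B X)) = idm _.
Proof. rewrite <- cA. apply (comonoid_lcounit _ _ mx). Qed.
Lemma Drc (X : O) : Dl M X ;; ((idm (B X) ⊠ ee M X) ;; ru (B X)) = idm _.
Proof. rewrite <- cA. apply (comonoid_rcounit _ _ mx). Qed.
Lemma Dcc (X : O) : Dl M X ;; sym (B X) (B X) = Dl M X. Proof. apply (comonoid_cocomm _ _ mx). Qed.
Lemma dD (X : O) : dlt M X ;; Dl M (B X) = Dl M X ;; (dlt M X ⊠ dlt M X). Proof. apply (dlt_Dl _ _ mx). Qed.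
Lemma de (X : O) : dlt M X ;; ee M (B X) = ee M X. Proof. apply (dlt_ee _ _ mx). Qed.
Lemma Dm (X Y : O) : mm M X Y ;; Dl M (X ⊗ Y) = (Dl M X ⊠ Dl M Y) ;; (tau _ _ _ _ ;; (mm M X Y ⊠ mm M X Y)).
Proof. rewrite (Dl_mon _ _ mx). apply cA. Qed.
Lemma DK : mK M ;; Dl M K = lu_inv K ;; (mK M ⊠ mK M). Proof. apply (Dl_monK _ _ mx). Qed.
Lemma em2 (X Y : O) : mm M X Y ;; ee M (X ⊗ Y) = (ee M X ⊠ ee M Y) ;; lu K. Proof. apply (ee_mon _ _ mx). Qed.
Lemma eK2 : mK M ;; ee M K = idm K. Proof. apply (ee_monK _ _ mx). Qed.
Lemma Dco (X : O) : Dl M X ;; ((dlt M X ⊠ dlt M X) ;; mm M (B X) (B X)) = dlt M X ;; bm M (Dl M X).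
Proof. rewrite <- cA. apply (Dl_coalg _ _ mx). Qed.
Lemma eco (X : O) : ee M X ;; mK M = dlt M X ;; bm M (ee M X). Proof. apply (ee_coalg _ _ mx). Qed.

Lemma mn1 {X X' Y : O} (f : hom X X') : (bm M f ⊠ idm (B Y)) ;; mm M X' Y = mm M X Y ;; bm M (f ⊠ idm Y).
Proof. rewrite <- bid, mn. reflexivity. Qed.
Lemma mn2 {X Y Y' : O} (g : hom Y Y') : (idm (B X) ⊠ bm M g) ;; mm M X Y' = mm M X Y ;; bm M (idm X ⊠ g).
Proof. rewrite <- bid, mn. reflexivity. Qed.
End M2.

Section M3.
Context {C : ASMC} (M : MCM C) (A : ob C).
Local Notation O := (ob C).
Local Notation K := (@unitob C).
Local Notation "! f" := (bm M f) (at level 9).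
Local Notation B := (bo M A).
Local Notation d := (dlt M A).
Local Notation e := (ee M A).
Local Notation ep := (eps M A).
Local Notation m := (mm M).
Local Notation Dl := (Dl M A).
Local Notation nb := (nablaA M A).
Local Notation u := (uA M A).

Definition hh : hom (B ⊗ B) A := ((ep ⊠ e) ;; ru A) ⊕ ((e ⊠ ep) ;; lu A).
Lemma nb_def : nb = (d ⊠ d) ;; (m B B ;; bm M hh).
Proof. unfold nablaA. apply cA. Qed.

Lemma N1 : nb ;; ep = hh.
Proof. rewrite nb_def. ra. rwb en. rw em. rwb tc. rewrite !cu1, tid, idl. reflexivity. Qed.
Lemma N2 : nb ;; e = (e ⊠ e) ;; lu K.
Proof. rewrite nb_def. ra. rw een. rw em2. rwb tc. rewrite !de. reflexivity. Qed.
Lemma N3 : nb ;; dlt M A = (d ⊠ d) ;; (m B B ;; bm M nb).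
Proof.
  rewrite nb_def. ra. rwb dn. rw dm. rwb tc. rewrite !cas, tc. ra. rw mn. rewrite !bcomp. ra. reflexivity.
Qed.
Lemma U1 : u ;; e = idm K.
Proof. unfold uA. ra. rw een. apply eK2. Qed.
Lemma U2 : u ;; Dl = lu_inv K ;; (u ⊠ u).
Proof. unfold uA. ra. rw Dn. rw DK. rwb tc. reflexivity. Qed.
Lemma U3 : u ;; d = mK M ;; bm M u.
Proof. unfold uA. ra. rwb dn. rw dK. rewrite bcomp. reflexivity. Qed.
Lemma U4 : u ;; ep = zero K A.
Proof. unfold uA. ra. rwb en. rw eK. rewrite idl. rewrite ?czr. reflexivity. Qed.
Lemma HU : (u ⊠ idm B) ;; hh = lu B ;; ep.
Proof.
  unfold hh. rewrite cpr. ra. rwb tc. rwb tc. rewrite U4, U1, !idl, tzl, czl, p0l, lun. reflexivity.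
Qed.
Lemma HU' : (idm B ⊠ u) ;; hh = ru B ;; ep.
Proof.
  unfold hh. rewrite cpr. ra. rwb tc. rwb tc. rewrite U4, U1, !idl, tzr, czl, p0, run. reflexivity.
Qed.
Lemma N4l : (u ⊠ idm B) ;; nb = lu B.
Proof.
  rewrite nb_def. rwb tc. rewrite U3, idl, tsL. ra. rw mn1. rwb bcomp. rewrite HU, bcomp.
  rewrite sl2. ra. rw mLu. rw lun. rw cu2. apply idr.
Qed.
Lemma N4r : (idm B ⊠ u) ;; nb = ru B.
Proof.
  rewrite nb_def. rwb tc. rewrite U3, idl, tsR. ra. rw mn2. rwb bcomp. rewrite HU', bcomp.
  rewrite sl1. ra. rw mRu. rw run. rw cu2. apply idr.
Qed.
Lemma L5a : (idm B ⊠ nb) ;; ((d ⊠ d) ;; m B B)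
  = (d ⊠ (d ⊠ d)) ;; ((idm _ ⊠ m B B) ;; (m B (B ⊗ B) ;; bm M (idm B ⊠ nb))).
Proof. rwb tc. rewrite idl, N3, tsR, wl. ra. rw mn2. reflexivity. Qed.
Lemma L5b : assoc B B B ;; ((nb ⊠ idm B) ;; ((d ⊠ d) ;; m B B))
  = (d ⊠ (d ⊠ d)) ;; ((idm _ ⊠ m B B) ;; (m B (B ⊗ B) ;; bm M (assoc B B B ;; (nb ⊠ idm B)))).
Proof. rwb tc. rewrite idl, N3, tsL, wr. ra. rw mn1. rwb an. rwb mA. rwb bcomp. reflexivity. Qed.

Lemma S1s (X : O) : (idm X ⊠ lu K) ;; ru X = assoc X K K ;; ((ru X ⊠ idm K) ;; ru X).
Proof. coh. wnorm. reflexivity. Qed.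
Lemma S2s (X : O) : (idm K ⊠ ru X) ;; lu X = assoc K X K ;; ((lu X ⊠ idm K) ;; ru X).
Proof. coh. wnorm. reflexivity. Qed.
Lemma S3s (X : O) : (idm K ⊠ lu X) ;; lu X = assoc K K X ;; ((lu K ⊠ idm X) ;; lu X).
Proof. coh. wnorm. reflexivity. Qed.

Lemma KEY : (idm B ⊠ nb) ;; hh = assoc B B B ;; ((nb ⊠ idm B) ;; hh).
Proof.
  unfold hh. rewrite !cpr. ra. rwb tc. rwb tc. rwb tc. rwb tc. rewrite !idl.
  rewrite N1, N2. unfold hh. rewrite tpr, tpl, !cpl, !cpr, pA. ra. f_equal; [|f_equal].
  - rewrite tsR, tsL. ra. rwb an. rewrite S1s. reflexivity.
  - rewrite tsR, tsL. ra. rwb an. rewrite S2s. reflexivity.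
  - rewrite tsR, tsL. ra. rwb an. rewrite S3s. reflexivity.
Qed.
Lemma N5 : (idm B ⊠ nb) ;; nb = assoc B B B ;; ((nb ⊠ idm B) ;; nb).
Proof.
  rewrite nb_def at 2 4. ra. rw L5a. rw L5b. rewrite <- !bcomp, KEY. ra. reflexivity.
Qed.
Lemma N6 : nb ;; Dl = (Dl ⊠ Dl) ;; (tau B B B B ;; (nb ⊠ nb)).
Proof.
  rewrite !nb_def. ra. rw Dn. rw Dm. rwb (tc d _ d _). rewrite !dD, tc. ra. rw TN.
  rewrite <- !tc. ra. reflexivity.
Qed.
End M3.

Section M4.
Context {C : ASMC} (M : MCM C) (A : ob C).
Local Notation O := (ob C).
Local Notation K := (@unitob C).
Local Notation B := (bo M A).
Local Notation d := (dlt M A).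
Local Notation e := (ee M A).
Local Notation ep := (eps M A).
Local Notation m := (mm M).
Local Notation D := (Dl M A).
Local Notation nb := (nablaA M A).
Local Notation u := (uA M A).

Lemma g_T_id (X : O) : TmA M A X X (idm X) = idm (TA M A X).
Proof. apply tid. Qed.
Lemma g_T_comp (X Y Z : O) (f : hom X Y) (g : hom Y Z) : TmA M A X Z (f ;; g) = TmA M A X Y f ;; TmA M A Y Z g.
Proof. apply wl. Qed.
Lemma g_mu_nat (X Y : O) (f : hom X Y) :
  TmA M A _ _ (TmA M A _ _ f) ;; muA M A Y = muA M A X ;; TmA M A _ _ f.
Proof. unfold TmA, muA, TA. ra. rw an. rewrite tid. rewrite <- !tc, !idl, !idr. reflexivity. Qed.
Lemma g_eta_nat (X Y : O) (f : hom X Y) : f ;; etaA M A Y = etaA M A X ;; TmA M A _ _ f.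
Proof. unfold TmA, etaA, TA. ra. rw lui_nat. rewrite <- !tc, !idl, !idr. reflexivity. Qed.
Lemma g_monad_assoc (X : O) : TmA M A _ _ (muA M A X) ;; muA M A X = muA M A (TA M A X) ;; muA M A X.
Proof.
  unfold TmA, muA, TA. rewrite wl. ra. rw an. rwb tc. rewrite idl.
  rewrite <- (tid B X). rw an. rwb tc. rewrite idl. rw pentr. rwb tc. rewrite idl. rewrite N5. ra. reflexivity.
Qed.
Lemma g_unit1 (X : O) : etaA M A (TA M A X) ;; muA M A X = idm (TA M A X).
Proof.
  unfold etaA, muA, TA. ra. rewrite <- (tid B X). rw an. rwb tc. rewrite N4l, idl. rw K1. rewrite li2, tid. reflexivity.
Qed.
Lemma g_unit2 (X : O) : TmA M A _ _ (etaA M A X) ;; muA M A X = idm (TA M A X).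
Proof.
  unfold TmA, etaA, muA, TA. rewrite wl. ra. rw an. rwb tc. rewrite N4r, idl. rw tri. rwb tc. rewrite li2, idl, tid. reflexivity.
Qed.
Lemma g_n_nat (X X' Y Y' : O) (f : hom X X') (g : hom Y Y') :
  TmA M A _ _ (f ⊠ g) ;; nA M A X' Y' = nA M A X Y ;; (TmA M A _ _ f ⊠ TmA M A _ _ g).
Proof.
  unfold TmA, nA, TA. ra. rwb tc. rewrite idl, idr, sl1. ra. rewrite <- (tid B B). rw TN. reflexivity.
Qed.
End M4.

Section M5.
Context {C : ASMC} (M : MCM C) (A : ob C).
Local Notation O := (ob C).
Local Notation K := (@unitob C).
Local Notation B := (bo M A).
Local Notation d := (dlt M A).
Local Notation e := (ee M A).
Local Notation ep := (eps M A).
Local Notation m := (mm M).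
Local Notation D := (Dl M A).
Local Notation nb := (nablaA M A).
Local Notation u := (uA M A).

Lemma Dca' : D ;; (idm B ⊠ D) = D ;; ((D ⊠ idm B) ;; assoc_inv B B B).
Proof. rewrite <- (idr (D ;; (idm B ⊠ D))), <- (ai1 B B B). ra. rw Dca. reflexivity. Qed.

Lemma g_n_coassoc (X Y Z : O) :
  TmA M A _ _ (assoc X Y Z) ;; nA M A (X ⊗ Y) Z ;; (nA M A X Y ⊠ idm (TA M A Z))
  = nA M A X (Y ⊗ Z) ;; (idm (TA M A X) ⊠ nA M A Y Z) ;; assoc (TA M A X) (TA M A Y) (TA M A Z).
Proof.
  unfold TmA, nA, TA. ra. rwb tc. rewrite idl, idr.
  rewrite (wr (D ⊠ idm (X ⊗ Y))). ra. rewrite <- (tid B Z). rwb TN.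
  rwb (tc D _ (assoc X Y Z) _). rewrite !tid, idr.
  rewrite (wl (D ⊠ idm (Y ⊗ Z))). ra. rewrite <- (tid B X). rwb TN. rwb (tc D _ _ _). rewrite Dca', !tid, idl.
  rewrite (sl1 (D ;; (D ⊠ idm B)) (assoc X Y Z)), !wr. ra. f_equal. f_equal. coh. wnorm. rw (under _ (bn3 _ _ _)). reflexivity.
Qed.
End M5.
Section M6.
Context {C : ASMC} (M : MCM C) (A : ob C).
Local Notation O := (ob C).
Local Notation K := (@unitob C).
Local Notation B := (bo M A).
Local Notation d := (dlt M A).
Local Notation e := (ee M A).
Local Notation ep := (eps M A).
Local Notation m := (mm M).
Local Notation D := (Dl M A).
Local Notation nb := (nablaA M A).
Local Notation u := (uA M A).

Lemma g_n_lcounit (X : O) : nA M A K X ;; (nKA M A ⊠ idm (TA M A X)) ;; lu (TA M A X) = TmA M A _ _ (lu X).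
Proof.
  unfold TmA, nA, nKA, TA. ra. rwb run. rewrite wr. ra. rewrite <- (tid B X). rwb TN.
  rwb (tc D _ _ _).
  assert (H : tau K B K X ;; ((ru K ⊠ (idm B ⊠ idm X)) ;; lu (B ⊗ X)) = lu B ⊠ lu X) by (coh; wnorm; reflexivity).
  rewrite H, tid, idl. rwb tc. ra. rewrite Dlc, idl. reflexivity.
Qed.
Lemma g_n_rcounit (X : O) : nA M A X K ;; (idm (TA M A X) ⊠ nKA M A) ;; ru (TA M A X) = TmA M A _ _ (ru X).
Proof.
  unfold TmA, nA, nKA, TA. ra. rwb run. rewrite wl. ra. rewrite <- (tid B X). rwb TN.
  rwb (tc D _ _ _).
  assert (H : tau B K X K ;; (((idm B ⊠ idm X) ⊠ ru K) ;; ru (B ⊗ X)) = ru B ⊠ ru X) by (coh; wnorm; reflexivity).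
  rewrite H, tid, idl. rwb tc. ra. rewrite Drc, idl. reflexivity.
Qed.
Lemma g_n_sym (X Y : O) : nA M A X Y ;; sym (TA M A X) (TA M A Y) = TmA M A _ _ (sym X Y) ;; nA M A Y X.
Proof.
  unfold TmA, nA, TA. ra. rewrite C3. rwb tc. rewrite Dcc. rwb tc. rewrite !idl, !idr. reflexivity.
Qed.

Lemma g_mu_comon (X Y : O) :
  muA M A (X ⊗ Y) ;; nA M A X Y = TmA M A _ _ (nA M A X Y) ;; nA M A (TA M A X) (TA M A Y) ;; (muA M A X ⊠ muA M A Y).
Proof.
  unfold TmA, nA, muA, TA. ra. rwb (tc nb _ _ _). rewrite idl, N6, !wr. ra. rewrite <- (tid X Y). rw TN.
  rwb an. rwb (tc (idm B) _ _ _). rewrite idl, idr, tsR, tc. ra. f_equal.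
  assert (H : assoc (B ⊗ B) (B ⊗ B) (X ⊗ Y) ;; ((tau B B B B ⊠ (idm X ⊠ idm Y)) ;; tau (B ⊗ B) (B ⊗ B) X Y)
    = (idm (B ⊗ B) ⊠ tau B B X Y) ;; (tau B B (B ⊗ X) (B ⊗ Y) ;; (assoc B B X ⊠ assoc B B Y)))
    by (coh; wnorm; rw (under _ (bn3 _ _ _)); reflexivity).
  rw H. reflexivity.
Qed.
Lemma g_mu_comonK : muA M A K ;; nKA M A = TmA M A _ _ (nKA M A) ;; nKA M A.
Proof.
  unfold TmA, nKA, muA, TA. ra. rw run. rewrite N2. rwb (run (e ⊠ e)). rwb an. rewrite wl. ra.
  rwb (run e). rwb (tc (idm B) _ _ _). rewrite idl. rwb (run e). rewrite wl. ra. rwb xch. rwb (tc (idm B) _ _ _). rewrite idl, idr.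
  f_equal.
  coh. wnorm. reflexivity.
Qed.
Lemma g_eta_comon (X Y : O) : etaA M A (X ⊗ Y) ;; nA M A X Y = etaA M A X ⊠ etaA M A Y.
Proof.
  unfold etaA, nA, TA. ra. rwb (tc u _ _ _). rewrite U2, idl, wr. ra. rewrite <- (tid X Y). rw TN.
  rewrite tc.
  assert (H : lu_inv (X ⊗ Y) ;; ((lu_inv K ⊠ (idm X ⊠ idm Y)) ;; tau K K X Y) = lu_inv X ⊠ lu_inv Y)
    by (coh; wnorm; reflexivity).
  rw H. reflexivity.
Qed.
Lemma g_eta_comonK : etaA M A K ;; nKA M A = idm K.
Proof.
  unfold etaA, nKA, TA. ra. rw run. rw U1. rewrite idr, <- K2. apply li2.
Qed.
End M6.

Section M7.
Context {C : ASMC} (M : MCM C).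
Local Notation O := (ob C).
Local Notation K := (@unitob C).
Local Notation "! f" := (bm M f) (at level 9).
Local Notation B := (bo M).
Local Notation m := (mm M).

Lemma mAi (X Y Z : O) : (m X Y ⊠ idm (B Z)) ;; (m (X ⊗ Y) Z ;; bm M (assoc_inv X Y Z))
   = assoc_inv (B X) (B Y) (B Z) ;; ((idm (B X) ⊠ m Y Z) ;; m X (Y ⊗ Z)).
Proof.
  apply (mono_canc (assoc (B X) (B Y) (B Z)) _ (ai2 _ _ _)). cancel. rwb mA.
  rewrite <- bcomp, ai1, bid, idr. reflexivity.
Qed.

Lemma C6 (P Q R S : O) : tau (B P) (B Q) (B R) (B S) ;; ((m P R ⊠ m Q S) ;; m (P ⊗ R) (Q ⊗ S))
  = (m P Q ⊠ m R S) ;; (m (P ⊗ Q) (R ⊗ S) ;; bm M (tau P Q R S)).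
Proof.
  unfold tau. rewrite !bcomp. ra. rewrite (sl2 (m P Q)). ra. rw mAi. rewrite <- (tid (B P) (B Q)). rw ainv_nat.
  rwb mn2. rwb mn2. rwb mn2.
  repeat (rwb (tc (idm (B P)) _ _ _); rewrite idl). ra.
  rw mA. rwb mn1. rwb (tc (m Q R) _ _ _). rewrite idl, <- mS, wr. ra. rw mAi.
  rewrite !wl. ra. rw mA. rw an. rewrite tid. rwb (tc (idm (B P ⊗ B R)) _ _ _). rewrite idl, idr. reflexivity.
Qed.
End M7.

Section M8.
Context {C : ASMC} (M : MCM C) (A : ob C).
Local Notation O := (ob C).
Local Notation K := (@unitob C).
Local Notation B := (bo M A).
Local Notation d := (dlt M A).
Local Notation e := (ee M A).
Local Notation ep := (eps M A).
Local Notation m := (mm M).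
Local Notation D := (Dl M A).
Local Notation nb := (nablaA M A).
Local Notation u := (uA M A).

Lemma g_lam_nat (X Y : O) (f : hom X Y) :
  TmA M A _ _ (bm M f) ;; lamA M A Y = lamA M A X ;; bm M (TmA M A _ _ f).
Proof. unfold TmA, lamA, TA. ra. rwb tc. rewrite idl, idr, sl1. ra. rw mn2. reflexivity. Qed.

Lemma g_lam_mu (X : O) :
  muA M A (bo M X) ;; lamA M A X = TmA M A _ _ (lamA M A X) ;; lamA M A (TA M A X) ;; bm M (muA M A X).
Proof.
  unfold TmA, lamA, muA, TA. ra. rwb (tc nb _ _ _). rewrite idl, N3, !wr. ra. rw mn1. rwb an. rwb mA. rwb bcomp.
  rewrite wl. ra. rwb xch. rwb (tc (idm B) _ _ _). rewrite idl, idr. reflexivity.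
Qed.

Lemma mLu' (X : O) : (mK M ⊠ idm (bo M X)) ;; m K X = lu (bo M X) ;; bm M (lu_inv X).
Proof.
  apply (epi_canc (bm M (lu X)) (bm M (lu_inv X))). { rewrite <- bcomp, li1, bid. reflexivity. }
  ra. rewrite mLu. rewrite <- bcomp, li2, bid, idr. reflexivity.
Qed.

Lemma g_lam_eta (X : O) : etaA M A (bo M X) ;; lamA M A X = bm M (etaA M A X).
Proof.
  unfold etaA, lamA, TA. ra. rwb (tc u _ _ _). rewrite U3, idl, wr. ra. rw mn1. rw mLu'. rw li2. rewrite idl, bcomp. reflexivity.
Qed.

Lemma g_lam_dlt (X : O) :
  TmA M A _ _ (dlt M X) ;; lamA M A (bo M X) ;; bm M (lamA M A X) = lamA M A X ;; dlt M (TA M A X).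
Proof.
  unfold TmA, lamA, TA. ra. rw dm. rwb (tc (idm B) _ _ _). rewrite idl, idr, bcomp. rwb mn1.
  rwb (tc d _ _ _). rewrite idr. rwb tc. rewrite cas, idl. reflexivity.
Qed.

Lemma g_lam_eps (X : O) : lamA M A X ;; eps M (TA M A X) = TmA M A _ _ (eps M X).
Proof. unfold TmA, lamA, TA. ra. rw em. rwb tc. rewrite cu1, idl. reflexivity. Qed.

Lemma g_lam_mK : nKA M A ;; mK M = TmA M A _ _ (mK M) ;; lamA M A K ;; bm M (nKA M A).
Proof.
  unfold TmA, lamA, nKA, TA. ra. rewrite bcomp. rwb (tc (idm B) _ _ _). rewrite idl, idr, sl1. ra.
  rw mRu. rw run. rwb eco. reflexivity.
Qed.
Lemma g_lam_mm (X Y : O) :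
  nA M A (bo M X) (bo M Y) ;; (lamA M A X ⊠ lamA M A Y) ;; mm M (TA M A X) (TA M A Y)
  = TmA M A _ _ (mm M X Y) ;; lamA M A (X ⊗ Y) ;; bm M (nA M A X Y).
Proof.
  unfold TmA, lamA, nA, TA. ra. rewrite (tc (d ⊠ idm _) _ (d ⊠ idm _) _). ra. rwb TN. rw C6.
  rwb (tc D _ _ _). rwb (tc (D ;; (d ⊠ d)) _ _ _). rewrite tid, !idl. ra.
  rewrite bcomp. rwb (tc (idm B) _ _ _). rewrite idl, idr. rwb mn1. rwb (tc d _ _ _). rewrite idr, <- Dco. ra. reflexivity.
Qed.
End M8.

Theorem proposition7p5 (C : ASMC) (M : MCM C) (A : ob C) :
  exponential_lifting_monad C (mcm_data M) (TA M A) (TmA M A) (muA M A) (etaA M A)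
    (nA M A) (nKA M A) (lamA M A).
Proof.
  constructor.
  - constructor.
    + apply g_T_id.
    + apply g_T_comp.
    + apply g_mu_nat.
    + apply g_eta_nat.
    + apply g_monad_assoc.
    + apply g_unit1.
    + apply g_unit2.
    + apply g_n_nat.
    + apply g_n_coassoc.
    + apply g_n_lcounit.
    + apply g_n_rcounit.
    + apply g_n_sym.
    + apply g_mu_comon.
    + apply g_mu_comonK.
    + apply g_eta_comon.
    + apply g_eta_comonK.
  - apply g_lam_nat.
  - apply g_lam_mu.
  - apply g_lam_eta.
  - apply g_lam_dlt.
  - apply g_lam_eps.
  - apply g_lam_mm.
  - apply g_lam_mK.
Qed.
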